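(* Let $P\in\mathbb N$ and let $\{E_i\mid i\in[P]\}$ be a collection of finite sets. There exists a pairwise disjoint collection $\{V_i\mid i\in[P]\}$ such that for all $i\in[P]$, $V_i\subseteq E_i$ and $\#V_i\ge\lfloor\#E_i/P\rfloor$.
   Context: $[P]=\{0,1,\dots,P-1\}$. *)

(* Defs.v *)
From mathcomp Require Import all_boot all_order.
From mathcomp Require Import finmap.

(* Main.v *)
Require Import Defs.
From mathcomp Require Import all_boot all_order.
From mathcomp Require Import finmap.
From mathcomp Require Import zify.
Local Open Scope fset_scope.

Lemma sub_card (T : choiceType) (S : {fset T}) k :
  (k <= #|` S|)%N -> exists W : {fset T}, W `<=` S /\ #|` W| = k.
Proof.
move=> hk; exists [fset x in take k S]; split.
  by apply/fsubsetP=> x; rewrite inE => /mem_take.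
rewrite card_fseq undup_id ?take_uniq ?fset_uniq // size_take.
by apply/minn_idPl.
Qed.

Lemma card_bigcup (T : choiceType) (I : eqType) (r : seq I) (Q : pred I) (F : I -> {fset T}) :
  (#|` \big[fsetU/fset0]_(j <- r | Q j) F j| <= \sum_(j <- r | Q j) #|` F j|)%N.
Proof.
elim: r => [|a r IH]; first by rewrite !big_nil cardfs0.
rewrite !big_cons; case: (Q a) => //.
apply: leq_trans (leq_card_fsetU _ _) _.
by rewrite leq_add2l.
Qed.

Lemma argmax_ex (P : nat) (A : {set 'I_P}) (f : 'I_P -> nat) (i0 : 'I_P) :
  i0 \in A -> exists2 m, m \in A & forall j, j \in A -> (f j <= f m)%N.
Proof.
move=> hi0; case: (arg_maxnP f hi0) => m hm hmax; by exists m.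
Qed.

Lemma main_lemma (T : choiceType) (P : nat) (E : 'I_P -> {fset T}) n :
  forall A : {set 'I_P}, #|A| = n ->
  exists V : 'I_P -> {fset T},
    (forall i j, i \in A -> j \in A -> i != j -> V i `&` V j = fset0) /\
    (forall i, i \in A -> V i `<=` E i /\ #|` V i| = (#|` E i| %/ P)%N).
Proof.
elim: n => [|n IH] A hA.
  exists (fun _ => fset0); split => i; move/eqP: hA; rewrite cards_eq0 => /eqP ->;
  by rewrite inE.
have [i0 hi0] : exists i0, i0 \in A.
  by apply/set0Pn; rewrite -card_gt0 hA.
have [m hm hmax] := @argmax_ex P A (fun i => #|` E i|) i0 hi0.
set B := A :\ m.
have hB : #|B| = n by move: hA; rewrite (cardsD1 m A) hm /=; case.
have [V [Vdis Vsub]] := IH B hB.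
set U := \big[fsetU/fset0]_(j in B) V j.
set q := (#|` E m| %/ P)%N.
have hAP : (#|A| <= P)%N by rewrite -[X in (_ <= X)%N]card_ord max_card.
have hUc : (#|` U| <= n * q)%N.
  apply: leq_trans (card_bigcup _ _ _ _ _) _.
  rewrite -hB -sum_nat_const.
  apply: leq_sum => j hj; have [_ ->] := Vsub j hj.
  apply: leq_div2r; apply: hmax; move: hj; rewrite inE => /andP[].
  by [].
have hq : (q * P <= #|` E m|)%N by apply: leq_trunc_div.
have hcard : (q <= #|` E m `\` U|)%N.
  rewrite cardfsD.
  have h1 : (#|` E m `&` U| <= #|` U|)%N by apply: fsubset_leq_card; apply: fsubsetIr.
  have hn : (n.+1 <= P)%N by rewrite -hA.
  nia.
have [W [hW1 hW2]] := sub_card _ _ _ hcard.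
exists (fun i => if i == m then W else V i); split.
  have key : forall j, j \in A -> j != m -> W `&` V j = fset0.
    move=> j hj hjm; apply/eqP; rewrite fsetI_eq0; apply/fdisjointP => x hx.
    have := fsubsetP hW1 x hx; rewrite in_fsetD => /andP[hxU _].
    apply/negP => hxV; move/negP: hxU; apply.
    apply/bigfcupP; exists j => //.
    by rewrite mem_index_enum /= !inE hjm hj.
  move=> i j hi hj hij.
  case: eqP => him; case: eqP => hjm.
  - by move: hij; rewrite him hjm eqxx.
  - by apply: key => //; apply/eqP.
  - by rewrite fsetIC; apply: key => //; apply/eqP.
  - by apply: Vdis => //; rewrite !inE ?hi ?hj andbT; apply/eqP.
move=> i hi; case: eqP => him.
  split; last by rewrite hW2 him.
  by rewrite him; apply: fsubset_trans hW1 (fsubsetDl _ _).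
by apply: Vsub; rewrite !inE hi andbT; apply/eqP.
Qed.

Theorem proposition12 (T : choiceType) (P : nat) (E : 'I_P -> {fset T}) :
  exists V : 'I_P -> {fset T},
    (forall i j : 'I_P, i != j -> V i `&` V j = fset0) /\
    (forall i : 'I_P, V i `<=` E i /\ (#|` E i| %/ P <= #|` V i|)%N).
Proof.
have [V [h1 h2]] := main_lemma T P E _ _ (erefl #|[set: 'I_P]|).
exists V; split.
  by move=> i j; apply: h1; rewrite inE.
move=> i; have [-> ->] := h2 i (in_setT i); by split.
Qed.
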